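(* Let $H$ be a non-null series-parallel graph and let $C:V(H)\to\mathbb{Z}_{\ge 0}$ be a counter for $H$. Then $H$ has an active vertex, i.e., a vertex $v$ with $\deg_H(v)\le 2$ or $\deg_H(v)\le 3C(v)$.
   Context: Graphs are finite, may have parallel edges, but no loops. A graph is series-parallel if it has no subgraph isomorphic to a subdivision of $K_4$. For $v\in V(H)$, $\deg_H(v)$ is the number of edges incident with $v$ (counting parallel edges with multiplicity) and $\mathrm{val}_H(v)$ is the number of distinct neighbors of $v$. A function $C:V(H)\to\mathbb{Z}_{\ge0}$ is a counter for $H$ if $\deg_H(v)-\mathrm{val}_H(v)\le C(v)$ for every $v\in V(H)$. A vertex $v$ is active (with respect to $C$) if $\deg_H(v)\le 2$ or $\deg_H(v)\le 3C(v)$. *)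

(* Defs.v *)
From mathcomp Require Import all_boot.
Set Implicit Arguments. Unset Strict Implicit. Unset Printing Implicit Defensive.

(* A finite loopless multigraph on the finite vertex type V is given by a
   multiplicity function m : V -> V -> nat (m u v = number of parallel edges
   between u and v), symmetric and with m v v = 0. *)
Definition multigraph (V : finType) (m : V -> V -> nat) : Prop :=
  (forall u v, m u v = m v u) /\ (forall v, m v v = 0).

Definition adj (V : finType) (m : V -> V -> nat) : rel V := fun u v => 0 < m u v.

Definition deg (V : finType) (m : V -> V -> nat) (v : V) : nat := \sum_(u : V) m v u.

Definition valn (V : finType) (m : V -> V -> nat) (v : V) : nat :=
  #|[set u : V | adj m v u]|.

(* H contains a subgraph isomorphic to a subdivision of K4: four distinct
   branch vertices b 0..b 3, and for each pair i < j a path from b i to b j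
   (with interior vertex sequence P i j), the paths having no branch vertex
   in their interiors and pairwise disjoint interiors. *)
Definition has_K4_subdivision (V : finType) (m : V -> V -> nat) : Prop :=
  exists (b : 'I_4 -> V) (P : 'I_4 -> 'I_4 -> seq V),
    injective b /\
    (forall i j : 'I_4, i < j ->
       [/\ path (adj m) (b i) (rcons (P i j) (b j)),
           uniq (P i j) &
           forall x, x \in P i j -> x \notin codom b]) /\
    (forall i j k l : 'I_4, i < j -> k < l -> (i, j) != (k, l) ->
       [disjoint P i j & P k l]).

Definition series_parallel (V : finType) (m : V -> V -> nat) : Prop :=
  ~ has_K4_subdivision m.

Definition counter (V : finType) (m : V -> V -> nat) (C : V -> nat) : Prop :=
  forall v, deg m v - valn m v <= C v.

Definition active (V : finType) (m : V -> V -> nat) (C : V -> nat) (v : V) : bool :=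
  (deg m v <= 2) || (deg m v <= 3 * C v).

(* Main.v *)
Require Import Defs.
From mathcomp Require Import all_boot.
From mathcomp Require Import zify.
From Stdlib Require Import Classical.
Lemma uniq4 (V : finType) (u0 u1 u2 u3 : V) s1 s2 s3 :
  uniq (u0 :: s1 ++ u1 :: s2 ++ u2 :: s3 ++ [:: u3]) ->
  [/\ uniq [:: u0; u1; u2; u3],
      (forall x, x \in s1 ++ s2 ++ s3 -> x \notin [:: u0; u1; u2; u3]),
      [disjoint s1 & s2], [disjoint s1 & s3] & [disjoint s2 & s3]].
Proof.
move=> Hu.
have : uniq ([:: u0; u1; u2; u3] ++ s1 ++ s2 ++ s3).
  rewrite -(perm_uniq (s1 := u0 :: s1 ++ u1 :: s2 ++ u2 :: s3 ++ [:: u3])) //.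
  apply/permP => p /=; do 4 (try rewrite !count_cat /=).
  move: (count p s1) (count p s2) (count p s3) => a b c; lia.
rewrite cat_uniq => /and3P [H4 Hn Hs]; split => //.
- move=> x Hx; apply/negP => Hx'; move/hasPn: Hn => /(_ x Hx).
  by rewrite Hx'.
- move: Hs; rewrite cat_uniq has_cat negb_or => /and3P [_ /andP [H _] _].
  by rewrite disjoint_sym disjoint_has.
- move: Hs; rewrite cat_uniq has_cat negb_or => /and3P [_ /andP [_ H] _].
  by rewrite disjoint_sym disjoint_has.
- move: Hs; rewrite cat_uniq => /and3P [_ _]; rewrite cat_uniq => /and3P [_ H _].
  by rewrite disjoint_sym disjoint_has.
Qed.
Lemma K4seg (V : finType) (m : V -> V -> nat) u0 u1 u2 u3 s1 s2 s3 :
  [/\ uniq [:: u0; u1; u2; u3],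
      (forall x, x \in s1 ++ s2 ++ s3 -> x \notin [:: u0; u1; u2; u3]),
      [disjoint s1 & s2], [disjoint s1 & s3] & [disjoint s2 & s3]] ->
  uniq s1 -> uniq s2 -> uniq s3 ->
  path (adj m) u0 (s1 ++ u1 :: s2 ++ u2 :: s3 ++ [:: u3]) ->
  adj m u0 u3 -> adj m u0 u2 -> adj m u1 u3 -> has_K4_subdivision m.
Proof.
move=> [u4 nin d12 d13 d23] us1 us2 us3 Hp a03 a02 a13.
move: Hp; do 3 (try rewrite !cat_path /=).
move=> /and5P [p1 a1 p2 a2 /and3P [p3 a3 _]].

pose b := fun i : 'I_4 => nth u0 [:: u0; u1; u2; u3] i.
pose P := fun i j : 'I_4 => if (val i == 0) && (val j == 1) then s1 else
  if (val i == 1) && (val j == 2) then s2 else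
  if (val i == 2) && (val j == 3) then s3 else [::].
have n1 : forall x, x \in s1 -> x \notin codom b.
  move=> x Hx; apply/negP => /codomP [k Ek].
  by move: (nin x); rewrite !mem_cat Hx /= Ek /b; case: k {Ek} => [[|[|[|[|k]]]] Hk] //=; rewrite !inE eqxx ?orbT => /(_ isT).
have n2 : forall x, x \in s2 -> x \notin codom b.
  move=> x Hx; apply/negP => /codomP [k Ek].
  by move: (nin x); rewrite !mem_cat Hx /= ?orbT Ek /b; case: k {Ek} => [[|[|[|[|k]]]] Hk] //=; rewrite !inE eqxx ?orbT => /(_ isT).
have n3 : forall x, x \in s3 -> x \notin codom b.
  move=> x Hx; apply/negP => /codomP [k Ek].
  by move: (nin x); rewrite !mem_cat Hx /= ?orbT Ek /b; case: k {Ek} => [[|[|[|[|k]]]] Hk] //=; rewrite !inE eqxx ?orbT => /(_ isT).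
exists b, P; split; [|split].
- move=> i j; rewrite /b => Hij; apply: val_inj; apply/eqP.
  have := @nth_uniq _ u0 [:: u0; u1; u2; u3] i j (ltn_ord i) (ltn_ord j) u4.
  by rewrite Hij eqxx => <-.
- case=> [[|[|[|[|i]]]] Hi] //; case=> [[|[|[|[|j]]]] Hj] //= _; rewrite /P /b /=;
  split; rewrite ?rcons_path /= ?p1 ?p2 ?p3 ?a1 ?a2 ?a3 ?a03 ?a02 ?a13 //.
- case=> [[|[|[|[|i]]]] Hi] //; case=> [[|[|[|[|j]]]] Hj] //;
  case=> [[|[|[|[|k]]]] Hk] //; case=> [[|[|[|[|l]]]] Hl] //= _ _;
  rewrite /P /= => _;
  first [ by rewrite disjoint_has | by rewrite disjoint_sym disjoint_has | done | by rewrite disjoint_sym ].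
Qed.

Lemma revpath (T : Type) (e : rel T) (Hs : forall u v, e u v = e v u) x p z :
  path e x (rcons p z) -> path e z (rev p ++ [:: x]).
Proof.
move=> H; have := rev_path e x (rcons p z).
rewrite last_rcons belast_rcons rev_cons cats1 => ->.
by rewrite (@eq_path _ _ e) // => u v; rewrite Hs.
Qed.

Lemma nbr_in (V : finType) (m : V -> V -> nat) L
  (Hsym : forall u v, adj m u v = adj m v u) (Hirr : forall v, adj m v v = false)
  (HL : forall x t, uniq (x :: t) -> path (adj m) x t -> size t <= L) x t v :
  uniq (x :: t) -> path (adj m) x t -> size t = L -> adj m x v -> v \in t.
Proof.
move=> Hu Hp Hs Ha; case: (boolP (v \in x :: t)).
  by rewrite in_cons => /orP [/eqP Ev | //]; rewrite Ev Hirr in Ha.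
move=> Hn; have := HL v (x :: t); rewrite cons_uniq Hn Hu /= Hsym Ha Hp /= Hs => /(_ isT isT).
by rewrite ltnn.
Qed.

Lemma rotate (V : finType) (m : V -> V -> nat)
  (Hsym : forall u v, adj m u v = adj m v u) x0 p z y q :
  uniq (x0 :: p ++ z :: y :: q) -> path (adj m) x0 (p ++ z :: y :: q) -> adj m x0 y ->
  [/\ uniq (z :: rev p ++ x0 :: y :: q), path (adj m) z (rev p ++ x0 :: y :: q)
    & size (rev p ++ x0 :: y :: q) = size (p ++ z :: y :: q)].
Proof.
move=> Hu Hp Ha; split.
- rewrite (perm_uniq (s2 := x0 :: p ++ z :: y :: q)) //.
  apply/permP => pr /=; rewrite !count_cat count_rev /=.
  move: (count pr p) (count pr q) => a b; lia.
- move: Hp; rewrite -cat_rcons cat_path => /andP [H1 H2].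
  have -> : rev p ++ x0 :: y :: q = (rev p ++ [:: x0]) ++ y :: q by rewrite -catA.
  rewrite cat_path (@revpath _ _ Hsym _ _ _ H1) last_cat /= Ha.
  by move: H2; rewrite last_rcons /= => /andP [].
- by rewrite !size_cat size_rev.
Qed.

Lemma K4w (V : finType) (m : V -> V -> nat) u0 s1 u1 s2 u2 s3 u3 :
  uniq (u0 :: s1 ++ u1 :: s2 ++ u2 :: s3 ++ [:: u3]) ->
  path (adj m) u0 (s1 ++ u1 :: s2 ++ u2 :: s3 ++ [:: u3]) ->
  adj m u0 u3 -> adj m u0 u2 -> adj m u1 u3 -> has_K4_subdivision m.
Proof.
move=> Hu; apply: K4seg; first exact: uniq4.
- by move: Hu => /= /andP [_]; rewrite cat_uniq => /and3P [].
- by move: Hu => /= /andP [_]; rewrite cat_uniq => /and3P [_ _] /= /andP [_];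
     rewrite cat_uniq => /and3P [].
- by move: Hu => /= /andP [_]; rewrite cat_uniq => /and3P [_ _] /= /andP [_];
     rewrite cat_uniq => /and3P [_ _] /= /andP [_]; rewrite cat_uniq => /and3P [].
Qed.

Lemma perm_uniq_pre (T : eqType) (w r s : seq T) : perm_eq (w ++ r) s -> uniq s -> uniq w.
Proof. by move=> /perm_uniq <-; rewrite cat_uniq => /andP []. Qed.
Arguments rotate {V m} Hsym {x0 p z y q}.
Arguments nbr_in {V m L} Hsym Hirr HL {x t v}.
Arguments revpath {T e} Hs {x p z}.
Lemma cnt_cons (T : Type) (a : pred T) x s : count a (x :: s) = a x + count a s.
Proof. by []. Qed.
Lemma cnt_nil (T : Type) (a : pred T) : count a [::] = 0. Proof. by []. Qed.
Ltac permtac := apply/permP => ?; rewrite -?cats1 !(cnt_cons, count_cat, cnt_nil, count_rev).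
Ltac clearall := repeat match goal with H : _ |- _ => clear H end.
Lemma path_cons' (T : Type) (e : rel T) x y s : path e x (y :: s) = e x y && path e y s.
Proof. by []. Qed.
Lemma path_nil' (T : Type) (e : rel T) x : path e x [::] = true.
Proof. by []. Qed.
Ltac pathsplit := rewrite -?cats1 -?catA ?cat_cons ?cat0s; rewrite ?(cat_path, path_cons', path_nil', last_cat, last_cons, andbT).


Ltac splitH := repeat match goal with H : is_true (_ && _) |- _ => case/andP: H => ? ? end.
Ltac splitG := repeat (apply/andP; split); try done.

Lemma key_step (V : finType) (m : V -> V -> nat) L
  (Hsym : forall u v, adj m u v = adj m v u) (Hirr : forall v, adj m v v = false)
  (H3 : forall v a b, exists u, [&& adj m v u, u != a & u != b])
  (HL : forall x t, uniq (x :: t) -> path (adj m) x t -> size t <= L)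
  x0 p z y q
  (IH : forall x0' t' p' z' y' q', t' = p' ++ z' :: y' :: q' -> size p' < size p ->
        uniq (x0' :: t') -> path (adj m) x0' t' -> size t' = L -> adj m x0' y' ->
        has_K4_subdivision m)
  (Hu : uniq (x0 :: p ++ z :: y :: q)) (Hp : path (adj m) x0 (p ++ z :: y :: q))
  (Hs : size (p ++ z :: y :: q) = L) (Ha : adj m x0 y) : has_K4_subdivision m.
Proof.
case: (boolP (has (adj m x0) (behead (rcons p z)))) => [Hhas | Hmin].
  destruct p as [|x1 r]; first by [].
  move: Hhas => /= /hasP [w Hw Hxw].
  have [r1 [r2 Er]] : exists r1 r2, rcons r z = r1 ++ w :: r2.
    by case/splitPr: Hw => r1 r2; exists r1, r2.
  apply: (IH x0 ((x1 :: r) ++ z :: y :: q) (belast x1 r1) (last x1 r1) w (r2 ++ y :: q)) => //.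
  - by rewrite -[belast x1 r1 ++ _]cat_rcons -lastI /= -[r ++ z :: _]cat_rcons Er -catA.
  - rewrite size_belast /=; have := congr1 size Er; rewrite size_rcons size_cat /=; lia.
have Hmin' : forall v, v \in behead (rcons p z) -> ~~ adj m x0 v.
  by move=> v Hv; apply/negP => Hxv; move/hasPn: Hmin => /(_ v Hv); rewrite Hxv.
have [Hu' Hp' Hs'] := rotate Hsym Hu Hp Ha.
have [y' /and3P [Hzy' Hy'1 Hy'2]] := H3 z (last x0 p) y.
have := nbr_in Hsym Hirr HL Hu' Hp' (etrans Hs' Hs) Hzy'.
rewrite mem_cat mem_rev in_cons in_cons => /orP [Hy'p | /orP [/eqP Ex | /orP [/eqP Ey | Hy'q]]].
- have [p1 [p2 Ep]] : exists p1 p2, p = p1 ++ y' :: p2.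
    by case/splitPr: Hy'p => p1 p2; exists p1, p2.
  destruct p2 as [|Z p2'].
    by move: Hy'1; rewrite Ep last_cat /= eqxx.
  apply: (IH z (rev p ++ x0 :: y :: q) (rev p2') Z y' (rev p1 ++ x0 :: y :: q)) => //.
  + by rewrite Ep rev_cat !rev_cons -!cats1 -!catA.
  + by rewrite Ep size_cat size_rev /=; lia.
  + exact: etrans Hs' Hs.
- destruct p as [|x1 r].
    by move: Hy'1; rewrite Ex /= eqxx.
  have := Hmin' z; rewrite /= mem_rcons mem_head => /(_ isT).
  by rewrite Hsym -Ex Hzy'.
- by move: Hy'2; rewrite Ey eqxx.
have [b /and3P [Hxb Hb1 Hb2]] := H3 x0 (head z p) y.
have Hbq : b \in q.
  move: (nbr_in Hsym Hirr HL Hu Hp Hs Hxb).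
  rewrite -cat_rcons mem_cat in_cons => /or3P [Hbp | /eqP Eb | //].
  - have : b \in behead (rcons p z).
      destruct p as [|x1 r]; first by move: Hbp Hb1; rewrite /= inE => ->.
      by move: Hbp Hb1; rewrite /= in_cons => /orP [-> | ].
    by move/Hmin'; rewrite Hxb.
  - by move: Hb2; rewrite Eb eqxx.
have [r1 [r2 Eq]] : exists r1 r2, q = r1 ++ b :: r2.
  by case/splitPr: Hbq => r1 r2; exists r1, r2.
have Hbx : adj m b x0 by rewrite Hsym.
have Hyx : adj m y x0 by rewrite Hsym.
have Hzy : adj m z y by move: Hp; rewrite cat_path /= => /and3P [_ _ /andP []].
have Hyz : adj m y z by rewrite Hsym.
have Hy'z : adj m y' z by rewrite Hsym.
have Hrev : path (adj m) z (rev p ++ [:: x0]).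
  by apply: (revpath Hsym); move: Hp; rewrite -cat_rcons cat_path => /andP [].
move: Hy'q; rewrite Eq mem_cat in_cons => /or3P [Hy'r1 | /eqP Eyb | Hy'r2].
- have [q1 [q3 Er1]] : exists q1 q3, r1 = q1 ++ y' :: q3.
    by case/splitPr: Hy'r1 => q1 q3; exists q1, q3.
  subst q r1.
  apply: (@K4w V m y q1 y' (rcons q3 b) x0 p z) => //.
  + apply: (@perm_uniq_pre _ _ r2 _ _ Hu).
    permtac; move: (count _ p) (count _ q1) (count _ q3) (count _ r2) => *; clearall; lia.
  + move: Hp; pathsplit => Hp; splitH; pathsplit; splitG.
- subst q y'.
  apply: (@K4w V m y r1 b [::] z (rev p) x0) => //.
  + apply: (@perm_uniq_pre _ _ r2 _ _ Hu).
    permtac; move: (count _ p) (count _ r1) (count _ r2) => *; clearall; lia.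
  + move: Hrev; pathsplit => Hrev; move: Hp; pathsplit => Hp; splitH; pathsplit; splitG.
- have [c1 [c2 Er2]] : exists c1 c2, r2 = c1 ++ y' :: c2.
    by case/splitPr: Hy'r2 => c1 c2; exists c1, c2.
  subst q r2.
  apply: (@K4w V m y r1 b (rcons c1 y') z (rev p) x0) => //.
  + apply: (@perm_uniq_pre _ _ c2 _ _ Hu).
    permtac; move: (count _ p) (count _ r1) (count _ c1) (count _ c2) => *; clearall; lia.
  + move: Hrev; pathsplit => Hrev; move: Hp; pathsplit => Hp; splitH; pathsplit; splitG.
Qed.


Lemma key (V : finType) (m : V -> V -> nat) L
  (Hsym : forall u v, adj m u v = adj m v u) (Hirr : forall v, adj m v v = false)
  (H3 : forall v a b, exists u, [&& adj m v u, u != a & u != b])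
  (HL : forall x t, uniq (x :: t) -> path (adj m) x t -> size t <= L) n :
  forall x0 p z y q, size p <= n -> uniq (x0 :: p ++ z :: y :: q) ->
  path (adj m) x0 (p ++ z :: y :: q) -> size (p ++ z :: y :: q) = L -> adj m x0 y ->
  has_K4_subdivision m.
Proof.
elim: n => [|n IHn] x0 p z y q Hn Hu Hp Hs Ha;
  apply: (@key_step V m L Hsym Hirr H3 HL x0 p z y q _ Hu Hp Hs Ha)
    => x0' t' p' z' y' q' Et Hlt; subst t'.
  by move: Hlt Hn; clearall; lia.
apply: IHn; move: Hlt Hn; clearall; lia.
Qed.

Lemma max_ex (P : nat -> Prop) B n0 : P n0 -> (forall n, P n -> n <= B) ->
  exists n, P n /\ forall k, P k -> k <= n.
Proof.
move=> H0 HB; apply: NNPP => Hno.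
have : forall d, exists n, P n /\ d <= n.
  elim=> [|d [n [Pn Hd]]]; first by exists n0.
  apply: NNPP => Hno2; apply: Hno; exists n; split=> // k Pk.
  apply: NNPP => Hk; apply: Hno2; exists k; split => //; lia.
move=> /(_ B.+1) [n [Pn Hn]]; have := HB n Pn; lia.
Qed.

Lemma dirac (V : finType) (m : V -> V -> nat)
  (Hsym : forall u v, adj m u v = adj m v u) (Hirr : forall v, adj m v v = false)
  (H3 : forall v a b, exists u, [&& adj m v u, u != a & u != b]) (v0 : V) :
  has_K4_subdivision m.
Proof.
have Hb : forall n, (exists x t, [/\ uniq (x :: t), path (adj m) x t & size t = n]) -> n <= #|V|.
  move=> n [x [t [Hu _ Hs]]]; have := max_card (mem (x :: t)).
  by rewrite (card_uniqP Hu) /= Hs => /ltnW.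
have [L [[x [t [Hu Hp Hs]]] HL]] :=
  @max_ex (fun n => exists x t, [/\ uniq (x :: t), path (adj m) x t & size t = n])
    #|V| 0 (ex_intro _ v0 (ex_intro _ [::] (And3 isT isT erefl))) Hb.
have HL' : forall x t, uniq (x :: t) -> path (adj m) x t -> size t <= L.
  by move=> x' t' Hu' Hp'; apply: HL; exists x', t'.
have [y /and3P [Hxy Hy1 _]] := H3 x (head x t) x.
have Hyt := nbr_in Hsym Hirr HL' Hu Hp Hs Hxy.
have [t1 [t2 Et]] : exists t1 t2, t = t1 ++ y :: t2.
  by case/splitPr: Hyt => t1 t2; exists t1, t2.
subst t; destruct t1 as [|c c'].
  by move: Hy1; rewrite /= eqxx.
have E : (c :: c') ++ y :: t2 = belast c c' ++ last c c' :: y :: t2.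
  by rewrite [c :: c']lastI cat_rcons.
rewrite E in Hu Hp Hs.
exact: (@key V m L Hsym Hirr H3 HL' _ _ _ _ _ _ (leqnn _) Hu Hp Hs Hxy).
Qed.

Theorem lemma7 (V : finType) (m : V -> V -> nat) (C : V -> nat) :
  multigraph m -> 0 < #|V| -> series_parallel m -> counter m C ->
  exists v : V, active m C v.
Proof.
move=> [Hms Hm0] Hcard Hsp Hc.
case: (pickP (active m C)) => [v Hv | Hn]; first by exists v.
exfalso; apply: Hsp.
have [v0 _] := card_gt0P Hcard.
apply: (@dirac V m _ _ _ v0).
- by move=> u v; rewrite /adj Hms.
- by move=> v; rewrite /adj Hm0.
move=> v a b.
have H3v : 3 <= valn m v.
  have := Hn v; have := Hc v; rewrite /active.
  move: (deg m v) (valn m v) (C v) => d k c H /norP [].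
  rewrite -!ltnNge; move: H; clearall; lia.
case: (boolP ([set u | adj m v u] \subset [set a; b])) => [Hsub | /subsetPn [u Hu Hnu]].
  have := subset_leq_card Hsub; rewrite cards2; move: H3v; rewrite /valn.
  move: (#|_|) (a != b) => k [] /=; clearall; lia.
exists u; move: Hu Hnu; rewrite !inE negb_or => -> /andP [-> ->]; done.
Qed.
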